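(* Let $(S,\Delta,\mathbb{P})$ be a probability space, $(U,d)$ a separable metric space, $\mathfrak{X}$ the set of $U$-valued random variables on $S$, $\mathcal{I}$ an ideal on $\mathbb{N}$, and $\underline{X}=\{X_n\}$ a sequence in $\mathfrak{X}$. If $\mathfrak{B}$ is a totally bounded subset of $(\mathfrak{X}^0,\rho)$ such that $\{n\in\mathbb{N}:X_n\in\mathfrak{B}\}\notin\mathcal{I}$, then $\Gamma^{r^w}_{\underline{X}}(\mathcal{I}^{\mathbb{P}})\neq\varnothing$ for every $r>0$.
   Context: The Ky Fan metric is $\rho(X,Y)=\inf\{\varepsilon>0:\mathbb{P}(d(X,Y)>\varepsilon)\leq\varepsilon\}$; $\mathfrak{X}^0$ is the set of equivalence classes of $\mathfrak{X}$ under almost sure equality, on which $\rho$ is a metric. An ideal on $\mathbb{N}$ is a family $\mathcal{I}\subseteq\mathcal{P}(\mathbb{N})$ with $\varnothing\in\mathcal{I}$, closed under finite unions and under subsets. $\Gamma^{r^w}_{\underline{X}}(\mathcal{I}^{\mathbb{P}})$ (weak rough $\mathcal{I}$-cluster points in probability) is the set of $Y\in\mathfrak{X}$ for which there is $\delta_*=\delta_*(Y)>0$ with $\{n:\mathbb{P}(d(X_n,Y)<r+\varepsilon)>\delta_*\}\notin\mathcal{I}$ for every $\varepsilon>0$. *)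

(* Defs.v *)
From HB Require Import structures.
From mathcomp Require Import all_boot all_order all_algebra.
From mathcomp Require Import all_classical all_reals all_analysis.
Set Implicit Arguments. Unset Strict Implicit. Unset Printing Implicit Defensive.
Import Order.TTheory GRing.Theory Num.Theory.
Local Open Scope classical_set_scope.
Local Open Scope ring_scope.

Section Defs.
Context {R : realType}.

Definition is_metric (U : Type) (dist : U -> U -> R) : Prop :=
  [/\ (forall x y, 0 <= dist x y),
      (forall x y, dist x y = 0 <-> x = y),
      (forall x y, dist x y = dist y x) &
      (forall x y z, dist x z <= dist x y + dist y z)].

Definition metric_separable (U : Type) (dist : U -> U -> R) : Prop :=
  exists D : set U, countable D /\
    forall x (e : R), 0 < e -> exists2 y, D y & dist x y < e.

Definition metric_open (U : Type) (dist : U -> U -> R) (O : set U) : Prop :=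
  forall x, O x -> exists2 e : R, 0 < e & forall y, dist x y < e -> O y.

Definition random_var (d : measure_display) (S : measurableType d)
  (U : Type) (dist : U -> U -> R) (X : S -> U) : Prop :=
  forall O : set U, metric_open dist O -> measurable (X @^-1` O).

Definition kyfan (d : measure_display) (S : measurableType d)
  (P : probability S R) (U : Type) (dist : U -> U -> R) (X Y : S -> U) : R :=
  inf [set eps : R | 0 < eps /\
        (P [set s | (eps < dist (X s) (Y s))%R] <= eps%:E)%E].

Definition as_eq (d : measure_display) (S : measurableType d)
  (P : probability S R) (U : Type) (X Y : S -> U) : Prop :=
  P [set s | X s <> Y s] = 0%E.

(* A subset B of X^0 is represented by a predicate on random variables; the
   class of X belongs to B iff X is a.s. equal to some member of B. *)
Definition in_classes (d : measure_display) (S : measurableType d)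
  (P : probability S R) (U : Type) (B : set (S -> U)) (X : S -> U) : Prop :=
  exists2 Z, B Z & as_eq P X Z.

Definition totally_bounded_kyfan (d : measure_display) (S : measurableType d)
  (P : probability S R) (U : Type) (dist : U -> U -> R) (B : set (S -> U)) : Prop :=
  forall eps : R, 0 < eps ->
    exists (k : nat) (c : nat -> S -> U),
      (forall i, (i < k)%N -> random_var dist (c i)) /\
      forall Z, B Z -> exists2 i, (i < k)%N & kyfan P dist Z (c i) < eps.

End Defs.

Definition is_ideal (I : set (set nat)) : Prop :=
  [/\ I set0,
      (forall A B, I A -> I B -> I (A `|` B)) &
      (forall A B, B `<=` A -> I A -> I B)].

Definition weak_rough_cluster_pts {R : realType} (d : measure_display)
  (S : measurableType d) (P : probability S R) (U : Type) (dist : U -> U -> R)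
  (I : set (set nat)) (X : nat -> S -> U) (r : R) : set (S -> U) :=
  [set Y | random_var dist Y /\
     exists2 delta : R, 0 < delta &
       forall eps : R, 0 < eps ->
         ~ I [set n | (delta%:E < P [set s | (dist (X n s) (Y s) < r + eps)%R])%E]].

(* Main.v *)
Require Import Defs.
From HB Require Import structures.
From mathcomp Require Import all_boot all_order all_algebra.
From mathcomp Require Import all_classical all_reals all_analysis.
From mathcomp Require Import lra.
Import Order.TTheory GRing.Theory Num.Theory.
Local Open Scope classical_set_scope.
Local Open Scope ring_scope.

Lemma ball_open1 {R : realType} {U : Type} {dist : U -> U -> R}
  (hm : is_metric dist) q a : metric_open dist [set u | dist u q < a].
Proof.
case: hm => h0 h1 hs ht x hx.
exists (a - dist x q); first by rewrite subr_gt0.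
move=> y hy /=. have := ht y x q. rewrite (hs y x). lra.
Qed.

Lemma ball_open2 {R : realType} {U : Type} {dist : U -> U -> R}
  (hm : is_metric dist) q a : metric_open dist [set u | dist q u < a].
Proof.
case: hm => h0 h1 hs ht x hx.
exists (a - dist q x); first by rewrite subr_gt0.
move=> y hy /=. have := ht q x y. lra.
Qed.

Lemma bigcup_countable_meas d (S : measurableType d) (I : Type) (D : set I)
  (F : I -> set S) : countable D -> (forall i, D i -> measurable (F i)) ->
  measurable (\bigcup_(i in D) F i).
Proof.
move=> /countable_injP[f finj] hF.
have -> : \bigcup_(i in D) F i =
    \bigcup_m \bigcup_(i in [set i | D i /\ f i = m]) F i.
  apply/seteqP; split => [s [i Di Fi]|s [m _ [i [Di _] Fi]]]; last by exists i.
  by exists (f i) => //; exists i.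
apply: bigcupT_measurable => m.
have [[i0 [Di0 fi0]]|nex] := pselect (exists i, D i /\ f i = m).
- have -> : \bigcup_(i in [set i | D i /\ f i = m]) F i = F i0.
    apply/seteqP; split => [s [i [Di fi] Fi]|s Fs]; last by exists i0.
    have <- // : i = i0.
    by apply: finj; rewrite ?inE //; congruence.
  exact: hF.
- have -> : \bigcup_(i in [set i | D i /\ f i = m]) F i = set0.
    apply/seteqP; split => [s [i hi _]|s //].
    by exfalso; apply: nex; exists i.
  exact: measurable0.
Qed.

Lemma small_inv {R : realType} {g : R} : 0 < g -> exists m : nat, m.+1%:R^-1 < g.
Proof.
move=> g0.
have := near_infty_natSinv_lt (PosNum g0).
by case => N /= _ hN; exists N; apply: hN => /=.
Qed.

Lemma meas_lt (R : realType) d (S : measurableType d) (U : Type)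
  (dist : U -> U -> R) (hm : is_metric dist) (hsep : metric_separable dist)
  (X Y : S -> U) (hX : random_var dist X) (hY : random_var dist Y) (t : R) :
  measurable [set s | dist (X s) (Y s) < t].
Proof.
case: hsep => D [cD dD]. have hm' := hm; case: hm' => h0 h1 hs ht.
have -> : [set s | dist (X s) (Y s) < t] = \bigcup_(q in D) \bigcup_m
   ([set s | dist (X s) q < m.+1%:R^-1] `&`
    [set s | dist q (Y s) < t - m.+1%:R^-1]).
  apply/seteqP; split => s /=.
  - move=> hlt.
    have g0 : 0 < (t - dist (X s) (Y s)) / 2 by rewrite divr_gt0 // subr_gt0.
    have [N hN] := small_inv g0.
    have N0 : 0 < N.+1%:R^-1 :> R by rewrite invr_gt0 ltr0Sn.
    have [q Dq hq] := dD (X s) _ N0.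
    exists q => //; exists N => //; split => //=.
    have := ht q (X s) (Y s). rewrite (hs q (X s)). set a := N.+1%:R^-1 in hN hq *; clearbody a. lra.
  - move=> [q Dq [m _ [/= h1' h2']]]. have := ht (X s) q (Y s).
    set a := m.+1%:R^-1 in h1' h2' *; clearbody a. lra.
apply: bigcup_countable_meas => // q Dq.
apply: bigcupT_measurable => m. apply: measurableI.
- exact: (hX _ (ball_open1 hm q m.+1%:R^-1)).
- exact: (hY _ (ball_open2 hm q (t - m.+1%:R^-1))).
Qed.

Lemma meas_gt (R : realType) d (S : measurableType d) (U : Type)
  (dist : U -> U -> R) (hm : is_metric dist) (hsep : metric_separable dist)
  (X Y : S -> U) (hX : random_var dist X) (hY : random_var dist Y) (t : R) :
  measurable [set s | t < dist (X s) (Y s)].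
Proof.
have -> : [set s | t < dist (X s) (Y s)] =
   ~` \bigcap_m [set s | dist (X s) (Y s) < t + m.+1%:R^-1].
  apply/seteqP; split => s /=.
  - move=> hlt hall.
    have [N hN] := small_inv (ltac:(rewrite subr_gt0; exact: hlt) : 0 < dist (X s) (Y s) - t).
    have := hall N I. rewrite /=.
    set a := N.+1%:R^-1 in hN *; clearbody a. lra.
  - move=> hn. rewrite ltNge; apply/negP => hle. apply: hn => m _ /=.
    have : 0 < m.+1%:R^-1 :> R by rewrite invr_gt0 ltr0Sn.
    set a := m.+1%:R^-1; clearbody a. lra.
apply: measurableC. apply: bigcapT_measurable => m. exact: meas_lt.
Qed.

Theorem proposition3p10 (R : realType) (d : measure_display)
  (S : measurableType d) (P : probability S R)
  (U : Type) (dist : U -> U -> R)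
  (hmetric : is_metric dist) (hsep : metric_separable dist)
  (I : set (set nat)) (hI : is_ideal I)
  (X : nat -> S -> U) (hX : forall n, random_var dist (X n))
  (B : set (S -> U)) (hB : forall Z, B Z -> random_var dist Z)
  (htb : totally_bounded_kyfan P dist B)
  (hnotI : ~ I [set n | in_classes P B (X n)]) :
  forall r : R, 0 < r -> weak_rough_cluster_pts P dist I X r !=set0.
Proof.
move=> r r0.
set e := Num.min r (2^-1 : R).
have e0 : 0 < e by rewrite lt_min r0 /=; lra.
have er : e <= r by rewrite ge_min lexx.
have e2 : e <= 2^-1 by rewrite ge_min lexx orbT.
have [k [c [hc hnet]]] := htb e e0.
pose A i := [set n | exists Z, [/\ B Z, as_eq P (X n) Z & kyfan P dist Z (c i) < e]].
have [i [ik hAi]] : exists i, (i < k)%N /\ ~ I (A i).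
  apply: contrapT => hno. apply: hnotI.
  have hall : forall j, (j <= k)%N -> I [set n | exists i, (i < j)%N /\ A i n].
    elim => [_|j IH hj].
    - have -> : [set n | exists i, (i < 0)%N /\ A i n] = set0.
        by apply/seteqP; split => n // [i []].
      by case: hI.
    - have -> : [set n | exists i, (i < j.+1)%N /\ A i n] =
          [set n | exists i, (i < j)%N /\ A i n] `|` A j.
        apply/seteqP; split => n /=.
        + move=> [i0 [ij Ain]]. rewrite ltnS leq_eqVlt in ij.
          case/orP: ij => [/eqP <- |ij]; [right|left; exists i0]; done.
        + case => [[i0 [ij Ain]]|Ajn]; [exists i0; split => //; exact: ltnW | exists j].
          done.
      case: hI => _ hU _. apply: hU; first exact: IH (ltnW hj).
      apply: contrapT => hn; apply: hno; exists j; split => //.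
  case: hI => _ _ hsub. apply: (hsub _ _ _ (hall k (leqnn k))).
  move=> n [Z BZ hZ] /=. have [i ik hi] := hnet Z BZ.
  by exists i; split => //; exists Z; split.
exists (c i). split; first exact: hc.
exists (2^-1); first by rewrite invr_gt0.
move=> eps eps0 hIe. apply: hAi. case: hI => _ _ hsub. apply: (hsub _ _ _ hIe).
move=> n [Z [BZ hZ hk]] /=.
have hZr := hB Z BZ; have hcr := hc i ik.
have ne : [set x : R | 0 < x /\
      (P [set s | (x < dist (Z s) (c i s))%R] <= x%:E)%E] !=set0.
  exists 1; split => //. apply: probability_le1. exact: meas_gt.
have [e' [e'0 He'] e'e] := inf_lt ne hk.
have hm' := hmetric; case: hm' => h0 h1 hs ht.
set E1 := [set s | e' < dist (Z s) (c i s)].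
set E2 := [set s | 0 < dist (X n s) (Z s)].
set T := [set s | dist (X n s) (c i s) < r + eps].
have mE1 : measurable E1 by exact: meas_gt.
have mE2 : measurable E2 by exact: meas_gt.
have mT : measurable T by exact: meas_lt.
have PE2 : P E2 = 0%E.
  have -> : E2 = [set s | X n s <> Z s]; last exact: hZ.
  apply/seteqP; split => s; rewrite /E2 /=.
  - move=> hp heq. move: hp; rewrite (proj2 (h1 _ _) heq) ltxx //.
  - move=> hne. rewrite lt0r h0 andbT; apply/eqP => h; apply: hne; exact: (proj1 (h1 _ _) h).
have sub : ~` (E1 `|` E2) `<=` T.
  move=> s /= hs'.
  have hE1 : ~ E1 s by move=> h; apply: hs'; left.
  have hE2 : ~ E2 s by move=> h; apply: hs'; right.
  move: hE1 hE2; rewrite /E1 /E2 /= => /negP; rewrite -leNgt => hE1 /negP; rewrite -leNgt => hE2.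
  have hXZ : X n s = Z s.
    apply: (proj1 (h1 _ _)). apply/eqP; rewrite eq_le hE2 h0 //.
  rewrite /T /= hXZ. lra.
have hle : (P (~` (E1 `|` E2)) <= P T)%E.
  apply: le_measure; rewrite ?inE //. apply: measurableC; exact: measurableU.
rewrite probability_setC in hle; last exact: measurableU.
rewrite measureU0 // in hle.
apply: (@lt_le_trans _ _ (1 - e'%:E)%E); last first.
  apply: le_trans hle. apply: leeB => //.
rewrite -EFinD lte_fin. lra.
Qed.
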